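(* Let $r\in[0,1]$, $\sigma>0$, $L_2>0$, $K_+,K_-\in\mathbb N_0$. There exist a dataset space $\mathbb X$ of finite sets, a pair of datasets $x\simeq_{K_+,K_-}x'$, and a function $h:\mathbb Y\to\mathbb R^D$ with $\max_{y\simeq_\pm y'}\|h(y)-h(y')\|_2=L_2$ such that, for $M=B\circ S$ with $S$ Poisson subsampling at rate $r$ and $B(y)=h(y)+V$, $V\sim\mathcal N(0,\sigma^2I_D)$, $$\Psi_\alpha(m_x\|m_{x'})=\Psi_\alpha\Big(\sum_{i=1}^{K_-+1}f^{(1)}_i\,\mathrm{Binom}(i-1\mid K_-,r)\ \Big\|\ \sum_{j=1}^{K_++1}f^{(2)}_j\,\mathrm{Binom}(j-1\mid K_+,r)\Big),$$ with $f^{(1)}_i$ the univariate normal density with mean $i-1$ and standard deviation $\sigma/L_2$ and $f^{(2)}_j$ the univariate normal density with mean $-(j-1)$ and standard deviation $\sigma/L_2$.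
   Context: Batches are subsets $y\subseteq x$ of datasets; Poisson subsampling with rate $r$: $s_x(y)=r^{|y|}(1-r)^{|x|-|y|}$ for $y\subseteq x$; $m_x(z)=\sum_y b_y(z)s_x(y)$ with $b_y$ the density of $B(y)$. $y\simeq_\pm y'$ iff one is obtained from the other by inserting or removing a single element. $x\simeq_{K_+,K_-}x'$ iff $x'=(x\setminus g_-)\cup g_+$ with $g_-\subseteq x$, $|g_-|=K_-$, $g_+\cap x=\emptyset$, $|g_+|=K_+$. $\mathrm{Binom}(k\mid n,r)=\binom nk r^k(1-r)^{n-k}$. $H_\alpha(p\|q)=\int\max\{p-\alpha q,0\}$ ($\alpha\ge0$), $\Lambda_\alpha(p\|q)=\int p^\alpha q^{1-\alpha}$ ($\alpha>1$); $\Psi_\alpha$ is either. *)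

(* Defs.v *)
From HB Require Import structures.
From mathcomp Require Import all_boot all_order all_algebra.
From mathcomp Require Import all_classical all_reals all_analysis.
Set Implicit Arguments. Unset Strict Implicit. Unset Printing Implicit Defensive.
Import Order.TTheory GRing.Theory Num.Theory.
Local Open Scope ring_scope.

Section defs.
Context {R : realType}.

Definition norm2 (D : nat) (v : 'rV[R]_D) : R := Num.sqrt (\sum_(i < D) v 0 i ^+ 2).

Definition adj_pm (T : finType) (y y' : {set T}) : Prop :=
  exists a : T, (a \notin y /\ y' = a |: y) \/ (a \notin y' /\ y = a |: y').

Definition adj_K (T : finType) (Kp Km : nat) (x x' : {set T}) : Prop :=
  exists (gm gp : {set T}), [/\ gm \subset x, #|gm| = Km, [disjoint gp & x],
    #|gp| = Kp & x' = (x :\: gm) :|: gp].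

Definition binomp (k n : nat) (r : R) : R := 'C(n, k)%:R * r ^+ k * (1 - r) ^+ (n - k).

Definition poisson_s (T : finType) (r : R) (x y : {set T}) : R :=
  r ^+ #|y| * (1 - r) ^+ (#|x| - #|y|).

Definition gauss_pdf (D : nat) (mu : 'rV[R]_D) (s : R) (z : 'rV[R]_D) : R :=
  (Num.sqrt (s ^+ 2 * pi *+ 2))^-1 ^+ D * expR (- (norm2 (z - mu)) ^+ 2 / (s ^+ 2 *+ 2)).

(* density of the subsampled Gaussian mechanism: m_x(z) = sum_{y \subset x} b_y(z) s_x(y) *)
Definition mix_density (T : finType) (D : nat) (h : {set T} -> 'rV[R]_D) (s r : R)
    (x : {set T}) (z : 'rV[R]_D) : R :=
  \sum_(y : {set T} | y \subset x) gauss_pdf (h y) s z * poisson_s r x y.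

(* Lebesgue integral over R^D of a nonnegative function, as an iterated
   integral over the coordinates (equal to the integral w.r.t. D-dimensional
   Lebesgue measure for nonnegative measurable integrands, by Tonelli). *)
Fixpoint intRD (D : nat) : ('rV[R]_D -> \bar R) -> \bar R :=
  match D return ('rV[R]_D -> \bar R) -> \bar R with
  | 0 => fun f => f 0
  | D'.+1 => fun f =>
      (\int[@lebesgue_measure R]_t intRD (fun v : 'rV[R]_D' => f (row_mx (const_mx (t : R) : 'rV[R]_1) v)))%E
  end.

Definition hockeyD (D : nat) (alpha : R) (p q : 'rV[R]_D -> R) : \bar R :=
  intRD (fun z => (Num.max (p z - alpha * q z) 0)%:E).
Definition lambdaD (D : nat) (alpha : R) (p q : 'rV[R]_D -> R) : \bar R :=
  intRD (fun z => (powR (p z) alpha * powR (q z) (1 - alpha))%:E).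

Definition hockey1 (alpha : R) (p q : R -> R) : \bar R :=
  (\int[@lebesgue_measure R]_t (Num.max (p t - alpha * q t) 0)%:E)%E.
Definition lambda1 (alpha : R) (p q : R -> R) : \bar R :=
  (\int[@lebesgue_measure R]_t (powR (p t) alpha * powR (q t) (1 - alpha))%:E)%E.

End defs.

(* Main.v *)
Require Import Defs.
From mathcomp Require Import all_boot all_order all_algebra all_classical all_reals all_analysis.
From mathcomp Require Import ring.
Import Order.TTheory GRing.Theory Num.Theory numFieldNormedType.Exports.
Local Open Scope ring_scope.

Section S.
Context {R : realType}.

Lemma scale_int (c : R) (H : R -> R) : 0 < c -> continuous H -> (forall x, 0 <= H x) ->
  (\int[@lebesgue_measure R]_t (c^-1 * H (t / c))%:E =
   \int[@lebesgue_measure R]_t (H t)%:E)%E.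
Proof.
move=> c0' cH H0.
have c0 : 0 < c^-1 by rewrite invr_gt0.
have dF : forall x : R, derivable (fun x => c^-1 * x) x 1.
  move=> x; apply: derivableM => //; exact: derivable_id.
have F' : (fun x : R => c^-1 * x)^`()%classic = cst c^-1.
  apply/funext => x; rewrite (@derive1Ml _ id) ?derive1_id ?mulr1//; exact: derivable_id.
rewrite [RHS](@increasing_ge0_integration_by_substitutionT _ (fun x => c^-1 * x)) //; last first.
- apply/cvgryPge => A; near=> x; rewrite -ler_pdivrMl//; near: x; exact: nbhs_pinfty_ge.
- apply/cvgrNyPle => A; near=> x; rewrite -ler_pdivlMl//; near: x; exact: nbhs_ninfty_le.
- by rewrite F'; exact: is_cvg_cst.
- by rewrite F'; exact: is_cvg_cst.
- by rewrite F'; exact: cst_continuous.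
- by move=> x y xy; rewrite ltr_pM2l.
apply: eq_integral => t _; rewrite F' /=; congr (_%:E); rewrite mulrC; congr (_ * _); congr H; exact: mulrC.
Unshelve. all: end_near. Qed.
End S.
Lemma subset_sum {R : realType} (T : finType) (S : {set T}) (n : nat) (F : nat -> R) (r : R) :
  #|S| = n ->
  \sum_(y : {set T} | y \subset S) F #|y| * poisson_s r S y =
  \sum_(k < n.+1) F k * binomp k n r.
Proof.
move=> <-.
rewrite (partition_big (fun y : {set T} => inord #|y| : 'I_(#|S|.+1)) predT) //=.
apply: eq_bigr => k _.
rewrite (eq_bigl (fun y : {set T} => y \in [set A : {set T} | A \subset S & #|A| == k])); last first.
  move=> y; rewrite inE; case yS: (y \subset S) => //=.
  have hy : (#|y| < #|S|.+1)%N by rewrite ltnS subset_leq_card.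
  apply/eqP/eqP => [<-|hk]; first by rewrite inordK.
  by apply: val_inj; rewrite /= inordK // hk.
rewrite (eq_bigr (fun _ => F k * (r ^+ k * (1 - r) ^+ (#|S| - k)))); last first.
  by move=> y; rewrite inE /poisson_s => /andP[_ /eqP ->].
rewrite sumr_const cards_draws /binomp.
by rewrite -mulrnAr -mulr_natl !mulrA.
Qed.
Lemma norm2_1 {R : realType} (v : 'rV[R]_1) : norm2 v = `|v 0 0|.
Proof. by rewrite /norm2 big_ord1 sqrtr_sqr. Qed.

Lemma gauss1 {R : realType} (sigma L2 m : R) (z : 'rV[R]_1) : 0 < sigma -> 0 < L2 ->
  gauss_pdf (const_mx (L2 * m)) sigma z = L2^-1 * normal_pdf m (sigma / L2) (z 0 0 / L2).
Proof.
move=> s0 L0.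
have L0' : L2 != 0 by rewrite gt_eqF.
rewrite /gauss_pdf normal_pdfE ?mulf_neq0 ?invr_eq0 ?gt_eqF //= /normal_peak /normal_fun.
rewrite norm2_1 real_normK ?num_real // !mxE expr1 mulrA.
congr (_ * _).
  have hp : 0 <= sigma ^+ 2 * pi *+ 2 by rewrite mulrn_wge0 // mulr_ge0 ?sqr_ge0 ?pi_ge0.
  rewrite -[(sigma/L2)^+2 * pi *+ 2](_ : (sigma ^+ 2 * pi *+ 2) * (L2^-1)^+2 = _); last by ring.
  rewrite sqrtrM // sqrtr_sqr gtr0_norm ?invr_gt0 // invfM invrK mulrCA mulVf // mulr1 //.
apply: f_equal; field.
by rewrite L0' gt_eqF.
Qed.
Lemma cont_sum {R : realType} n (g : 'I_n -> R -> R) :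
  (forall i, continuous (g i)) -> continuous (fun t => \sum_(i < n) g i t).
Proof.
elim: n g => [|n IH] g cg.
  rewrite (_ : (fun t => _) = cst 0); first exact: cst_continuous.
  by apply/funext => t; rewrite big_ord0.
rewrite (_ : (fun t => _) = (fun t => \sum_(i < n) g (widen_ord (leqnSn n) i) t) + g ord_max).
  move=> t; apply: continuousD; first exact: IH.
  exact: cg.
by apply/funext => t; rewrite big_ord_recr.
Qed.

Lemma binomp_ge0 {R : realType} (r : R) k n : 0 <= r -> r <= 1 -> 0 <= binomp k n r.
Proof. by move=> r0 r1; rewrite /binomp !mulr_ge0 ?exprn_ge0 ?subr_ge0. Qed.

Lemma mix_pos {R : realType} n (m : nat -> R) s r t : s != 0 -> 0 <= r -> r <= 1 ->
  0 < \sum_(i < n.+1) normal_pdf (m i) s t * binomp i n r.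
Proof.
move=> s0 r0 r1.
have [i hi] : exists i : 'I_n.+1, 0 < binomp i n r.
  have [rl1|] := ltP r 1.
    by exists ord0; rewrite /binomp bin0 !mul1r subn0 exprn_gt0 // subr_gt0.
  move=> r1'; have -> : r = 1 by apply/le_anti; rewrite r1 r1'.
  by exists ord_max; rewrite /binomp /= binn subnn expr1n !mul1r expr0.
rewrite (bigD1 i) //= ltr_pwDl //; first apply: mulr_gt0 hi.
  by rewrite normal_pdfE // mulr_gt0 ?expR_gt0 ?normal_peak_gt0.
by apply: sumr_ge0 => j _; rewrite mulr_ge0 ?normal_pdf_ge0 ?binomp_ge0.
Qed.

Lemma row_mx00 {R : realType} (t : R) :
  (row_mx (const_mx t : 'rV[R]_1) (0 : 'rV[R]_0) : 'rV[R]_(1 + 0)) 0 0 = t.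
Proof.
rewrite (_ : (0 : 'I_(1+0)) = lshift 0 0); last exact: val_inj.
by rewrite row_mxEl mxE.
Qed.

Theorem mainTheorem9 (R : realType) (r sigma L2 : R) (Kp Km : nat)
  (hr0 : 0 <= r) (hr1 : r <= 1) (hsigma : 0 < sigma) (hL2 : 0 < L2) :
  exists (T : finType) (x x' : {set T}) (D : nat) (h : {set T} -> 'rV[R]_D),
    [/\ adj_K Kp Km x x',
        (forall y y' : {set T}, adj_pm y y' -> norm2 (h y - h y') <= L2),
        (exists y y' : {set T}, adj_pm y y' /\ norm2 (h y - h y') = L2) &
        let mx := mix_density h sigma r x in
        let mx' := mix_density h sigma r x' in
        let f1 := fun t : R => \sum_(i < Km.+1)
                    normal_pdf (i%:R) (sigma / L2) t * binomp i Km r in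
        let f2 := fun t : R => \sum_(j < Kp.+1)
                    normal_pdf (- j%:R) (sigma / L2) t * binomp j Kp r in
        (forall alpha : R, 0 <= alpha -> hockeyD alpha mx mx' = hockey1 alpha f1 f2) /\
        (forall alpha : R, 1 < alpha -> lambdaD alpha mx mx' = lambda1 alpha f1 f2)].
Proof.
pose T := option ('I_Km + 'I_Kp)%type.
pose x : {set T} := [set Some (inl i) | i : 'I_Km].
pose x' : {set T} := [set Some (inr j) | j : 'I_Kp].
pose w (t : T) : R := if t \in x' then -1 else 1.
pose h (y : {set T}) : 'rV[R]_1 := const_mx (L2 * \sum_(t in y) w t).
have L0 : L2 != 0 by rewrite gt_eqF.
have hadj : forall (y : {set T}) a, a \notin y ->
    norm2 (h y - h (a |: y)) = L2 /\ norm2 (h (a |: y) - h y) = L2.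
  move=> y a ay; rewrite !norm2_1 !mxE big_setU1 //=.
  have -> : L2 * (w a + \sum_(t in y) w t) - L2 * \sum_(t in y) w t = L2 * w a by ring.
  have -> : L2 * \sum_(t in y) w t - L2 * (w a + \sum_(t in y) w t) = - (L2 * w a) by ring.
  rewrite normrN normrM gtr0_norm // /w; case: ifP => _; by rewrite ?normrN normr1 mulr1.
have disj : [disjoint x' & x].
  rewrite finset.disjoints_subset; apply/fintype.subsetP => t /imsetP[j _ ->]; rewrite inE /=.
  by apply/negP => /imsetP[i _ []].
have hcx : #|x| = Km by rewrite /x card_imset ?card_ord // => i j [].
have hcx' : #|x'| = Kp by rewrite /x' card_imset ?card_ord // => i j [].
exists T, x, x', 1%N, h; split.
- exists x, x'; split => //.
  by rewrite finset.setDv finset.set0U.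
- move=> y y' [a [[ay ->]|[ay' ->]]]; by [rewrite (hadj _ _ ay).1 | rewrite (hadj _ _ ay').2].
- exists (finset.set0 : {set T}), [set None]; split; last by rewrite -[[set None]]finset.setU0 (hadj finset.set0 None _).1 // finset.in_set0.
  by exists None; left; rewrite finset.in_set0 finset.setU0.
move=> mx mx' f1 f2.
have hmx : forall z : 'rV[R]_1, mx z = L2^-1 * f1 (z 0 0 / L2).
  move=> z; rewrite /mx /mix_density.
  transitivity (\sum_(y : {set T} | y \subset x) gauss_pdf (const_mx (L2 * (#|y|%:R))) sigma z * poisson_s r x y).
    apply: eq_bigr.
    move=> y yx. rewrite /h (_ : \sum_(t in y) w t = #|y|%:R) //.
    under eq_bigr => t ty do rewrite /w (disjointFl disj (fintype.subsetP yx t ty)).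
    by rewrite sumr_const.
  rewrite (@subset_sum R T x Km (fun k => gauss_pdf (const_mx (L2 * k%:R)) sigma z) r hcx).
  rewrite /f1 mulr_sumr; apply: eq_bigr => i _.
  by rewrite gauss1 // -mulrA.
have hmx' : forall z : 'rV[R]_1, mx' z = L2^-1 * f2 (z 0 0 / L2).
  move=> z; rewrite /mx' /mix_density.
  transitivity (\sum_(y : {set T} | y \subset x') gauss_pdf (const_mx (L2 * (- #|y|%:R))) sigma z * poisson_s r x' y).
    apply: eq_bigr.
    move=> y yx. rewrite /h (_ : \sum_(t in y) w t = - #|y|%:R) //.
    under eq_bigr => t ty do rewrite /w (fintype.subsetP yx t ty).
    by rewrite sumr_const mulNrn.
  rewrite (@subset_sum R T x' Kp (fun k => gauss_pdf (const_mx (L2 * - k%:R)) sigma z) r hcx').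
  rewrite /f2 mulr_sumr; apply: eq_bigr => i _.
  by rewrite gauss1 // -mulrA.
have sL0 : sigma / L2 != 0 by rewrite mulf_neq0 ?invr_eq0 ?gt_eqF.
have cf1 : continuous f1.
  apply: cont_sum => i t; apply: (@continuousM _ _ (normal_pdf _ _) (cst _)).
    exact: continuous_normal_pdf.
  exact: cst_continuous.
have cf2 : continuous f2.
  apply: cont_sum => i t; apply: (@continuousM _ _ (normal_pdf _ _) (cst _)).
    exact: continuous_normal_pdf.
  exact: cst_continuous.
have pf1 : forall t, 0 < f1 t by move=> t; exact: (@mix_pos R Km (fun k => k%:R) (sigma/L2) r t sL0 hr0 hr1).
have pf2 : forall t, 0 < f2 t by move=> t; exact: (@mix_pos R Kp (fun k => - k%:R) (sigma/L2) r t sL0 hr0 hr1).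
split => alpha ha.
- rewrite /hockeyD /hockey1 /=.
  transitivity (\int[@lebesgue_measure R]_t
     (L2^-1 * (fun s => Num.max (f1 s - alpha * f2 s) 0) (t / L2))%:E)%E.
    apply: eq_integral => t _; rewrite hmx hmx' row_mx00; congr (_%:E).
    by rewrite maxr_pMr ?invr_ge0 ?(ltW hL2) // mulr0 mulrBr mulrCA.
  apply: scale_int => //; last by move=> t; rewrite le_max lexx orbT.
  apply: (@max_fun_continuous _ _ _ (fun t => f1 t - alpha * f2 t) (cst 0)); last exact: cst_continuous.
  move=> t; apply: (@continuousB _ _ _ f1 (fun t => alpha * f2 t)); first exact: cf1.
  apply: (@continuousM _ _ (cst alpha) f2); [exact: cst_continuous|exact: cf2].
- rewrite /lambdaD /lambda1 /=.
  transitivity (\int[@lebesgue_measure R]_t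
     (L2^-1 * (fun s => powR (f1 s) alpha * powR (f2 s) (1 - alpha)) (t / L2))%:E)%E.
    apply: eq_integral => t _; rewrite hmx hmx' row_mx00; congr (_%:E).
    rewrite /= !powRM ?invr_ge0 ?(ltW hL2) ?(ltW (pf1 _)) ?(ltW (pf2 _)) //.
    rewrite mulrACA -powRD; last by rewrite invr_eq0 L0 implybT.
    by rewrite addrCA subrr addr0 powRr1 // invr_ge0 ltW.
  apply: scale_int => //; last by move=> t; rewrite mulr_ge0 ?powR_ge0.
  rewrite (_ : (fun s => _) = (fun s => expR (alpha * ln (f1 s)) * expR ((1 - alpha) * ln (f2 s)))); last first.
    by apply/funext => s; rewrite /powR (gt_eqF (pf1 s)) (gt_eqF (pf2 s)).
  move=> s; apply: (@continuousM _ _ (fun s => expR (alpha * ln (f1 s))) (fun s => expR ((1-alpha) * ln (f2 s)))).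
    apply: (@continuous_comp _ _ _ (fun s => alpha * ln (f1 s)) expR); last exact: continuous_expR.
    apply: (@continuousM _ _ (cst alpha) (fun s => ln (f1 s))); first exact: cst_continuous.
    exact: (continuous_comp (cf1 s) (continuous_ln (pf1 s))).
  apply: (@continuous_comp _ _ _ (fun s => (1 - alpha) * ln (f2 s)) expR); last exact: continuous_expR.
  apply: (@continuousM _ _ (cst (1 - alpha)) (fun s => ln (f2 s))); first exact: cst_continuous.
  exact: (continuous_comp (cf2 s) (continuous_ln (pf2 s))).
Qed.
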